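(* Let $\zeta_5=\exp(2\pi i/5)$, $K=\mathbb{Q}(\zeta_5)\subset\mathbb{C}$, and $\mathcal{O}_K=\mathbb{Z}[\zeta_5]$ its ring of integers. Let $\sigma:K\to\mathbb{C}$ be the field embedding with $\sigma(\zeta_5)=\zeta_5^2$, and set $$\mathcal{S}=\{z\in\mathcal{O}_K : |\sigma(z)|\le 1\}\subseteq\mathbb{C}.$$ Then for every $z\in\mathcal{S}$, $$\min_{z'\in\mathcal{S}\setminus\{z\}}|z'-z|\in\left\{\tfrac{\sqrt5-1}{2},\,1\right\}.$$
   Context: Elements of $K$ are regarded as complex numbers via the inclusion $K\subset\mathbb{C}$; $|\cdot|$ is the complex absolute value. *)

(* Defs.v *)
From Stdlib Require Import Reals ZArith.
From Coquelicot Require Import Coquelicot.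

Open Scope C_scope.

Definition zeta5 : C := (cos (2 * PI / 5), sin (2 * PI / 5))%R.

Definition ZtoC (n : Z) : C := RtoC (IZR n).

Definition zcomb (a0 a1 a2 a3 : Z) (w : C) : C :=
  ZtoC a0 + ZtoC a1 * w + ZtoC a2 * w ^ 2 + ZtoC a3 * w ^ 3.

Definition in_OK (z : C) : Prop :=
  exists a0 a1 a2 a3 : Z, z = zcomb a0 a1 a2 a3 zeta5.

(* The embedding sigma : K -> C with sigma(zeta5) = zeta5^2 sends
   a0 + a1 zeta5 + a2 zeta5^2 + a3 zeta5^3 to the same combination of powers
   of zeta5^2.  S = { z in O_K : |sigma z| <= 1 }. *)
Definition in_S (z : C) : Prop :=
  exists a0 a1 a2 a3 : Z,
    z = zcomb a0 a1 a2 a3 zeta5 /\ Cmod (zcomb a0 a1 a2 a3 (zeta5 ^ 2)) <= 1.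

(* Main.v *)
Require Import Defs.
From Stdlib Require Import Reals ZArith Lra Lia Psatz Classical.
From Coquelicot Require Import Coquelicot.
Open Scope C_scope.
Definition cc := cos (2 * PI / 5).
Definition ss := sin (2 * PI / 5).
Lemma ss_eq : (ss^2 + cc^2 - 1 = 0)%R.
Proof. unfold ss, cc. pose proof (sin2_cos2 (2*PI/5)) as H. unfold Rsqr in H. nra. Qed.
Lemma cc_pos : (0 < cc)%R.
Proof. unfold cc. apply cos_gt_0; pose proof PI_RGT_0; lra. Qed.
Lemma ss_pos : (0 < ss)%R.
Proof. unfold ss. apply sin_gt_0; pose proof PI_RGT_0; lra. Qed.
Lemma cc_eq : (4*cc^2 + 2*cc - 1 = 0)%R.
Proof.
  set (x := (2*PI/5)%R).
  assert (H3 : cos (x + 2*x) = cos (2*x)).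
  { replace (x + 2*x)%R with (2*PI - 2*x)%R by (unfold x; field).
    rewrite cos_minus, cos_2PI, sin_2PI. ring. }
  rewrite cos_plus, sin_2a, cos_2a_cos in H3.
  pose proof ss_eq as E. pose proof ss_pos. pose proof cc_pos.
  fold cc ss in *. unfold x in *. fold cc ss in *.
  assert (cc < 1)%R by nra.
  assert ((cc - 1) * (4*cc^2+2*cc-1) = 0)%R by nra.
  apply Rmult_integral in H2. destruct H2; lra.
Qed.
Lemma r_eq : (sqrt 5 = 4*cc+1)%R.
Proof.
  pose proof cc_eq; pose proof cc_pos.
  replace 5%R with ((4*cc+1)^2)%R by nra. rewrite sqrt_pow2; lra.
Qed.
Lemma zeta5_eq : zeta5 = (cc, ss).
Proof. reflexivity. Qed.
Definition Re4 (A0 A1 A2 A3 x y : R) : R :=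
  (A0 + A1*x + A2*(x*x-y*y) + A3*(x*x*x-3*x*y*y))%R.
Definition Im4 (A0 A1 A2 A3 x y : R) : R :=
  (A1*y + A2*(2*x*y) + A3*(3*x*x*y-y*y*y))%R.
Lemma zcomb_pair a0 a1 a2 a3 x y :
  zcomb a0 a1 a2 a3 (x,y) = (Re4 (IZR a0) (IZR a1) (IZR a2) (IZR a3) x y,
                             Im4 (IZR a0) (IZR a1) (IZR a2) (IZR a3) x y).
Proof.
  unfold zcomb, ZtoC, RtoC, Re4, Im4. simpl.
  apply injective_projections; simpl; ring.
Qed.
Lemma zeta2_eq : (zeta5 ^ 2 = (cc*cc - ss*ss, 2*cc*ss)%R).
Proof. rewrite zeta5_eq. simpl. apply injective_projections; simpl; ring. Qed.
Lemma Cmod_sq (p : C) : (Cmod p ^ 2 = fst p ^ 2 + snd p ^ 2)%R.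
Proof. unfold Cmod. rewrite pow2_sqrt; [ring| nra]. Qed.
Lemma zcomb_sub a0 a1 a2 a3 b0 b1 b2 b3 w :
  zcomb b0 b1 b2 b3 w - zcomb a0 a1 a2 a3 w = zcomb (b0-a0) (b1-a1) (b2-a2) (b3-a3) w.
Proof.
  destruct w as [x y]. rewrite !zcomb_pair. unfold Re4, Im4, Cminus, Cplus, Copp.
  simpl. rewrite !minus_IZR. apply injective_projections; simpl; ring.
Qed.
Lemma zcomb_add a0 a1 a2 a3 b0 b1 b2 b3 w :
  zcomb (a0+b0) (a1+b1) (a2+b2) (a3+b3) w = zcomb a0 a1 a2 a3 w + zcomb b0 b1 b2 b3 w.
Proof.
  destruct w as [x y]. rewrite !zcomb_pair. unfold Re4, Im4, Cplus.
  simpl. rewrite !plus_IZR. apply injective_projections; simpl; ring.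
Qed.
Definition Uq (A0 A1 A2 A3 : R) : R :=
  (2*(A0*A0+A1*A1+A2*A2+A3*A3) - (A0*A1+A1*A2+A2*A3) - (A0*A2+A1*A3+A0*A3))%R.
Definition Vq (A0 A1 A2 A3 : R) : R :=
  ((A0*A1+A1*A2+A2*A3) - (A0*A2+A1*A3+A0*A3))%R.
Lemma norm1 A0 A1 A2 A3 :
  ((Re4 A0 A1 A2 A3 cc ss)^2 + (Im4 A0 A1 A2 A3 cc ss)^2
    = (Uq A0 A1 A2 A3 + Vq A0 A1 A2 A3 * (4*cc+1))/2)%R.
Proof.
  pose proof ss_eq as H1; pose proof cc_eq as H2. unfold Re4, Im4, Uq, Vq.
  set (c:=cc) in *. set (s:=ss) in *. apply Rminus_diag_uniq.
  transitivity ((A3^2 + A2^2 + -2*A1*A3 + A1^2 + -2*A0*A2 + 2*c*A2*A3 + 2*c*A1*A2 + -6*c*A0*A3 + c^2*A3^2 + c^2*A2^2 + 2*c^2*A1*A3 + 2*c^3*A2*A3 + c^4*A3^2 + s^2*A3^2 + s^2*A2^2 + -2*s^2*A1*A3 + 2*s^2*c*A2*A3 + 2*s^2*c^2*A3^2 + s^4*A3^2)*(s^2+c^2-1) + (A1*A3 + -1*A0*A3 + A0*A2 + 2*c*A0*A3)*(4*c^2+2*c-1))%R; [field| rewrite H1, H2; ring].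
Qed.
Lemma norm2 A0 A1 A2 A3 :
  ((Re4 A0 A1 A2 A3 (cc*cc-ss*ss) (2*cc*ss))^2 + (Im4 A0 A1 A2 A3 (cc*cc-ss*ss) (2*cc*ss))^2
    = (Uq A0 A1 A2 A3 - Vq A0 A1 A2 A3 * (4*cc+1))/2)%R.
Proof.
  pose proof ss_eq as H1; pose proof cc_eq as H2. unfold Re4, Im4, Uq, Vq.
  set (c:=cc) in *. set (s:=ss) in *. apply Rminus_diag_uniq.
  transitivity ((A3^2 + -2*A2*A3 + A2^2 + 2*A1*A3 + -2*A1*A2 + A1^2 + -2*A0*A3 + 2*A0*A2 + -2*A0*A1 + c^2*A3^2 + 2*c^2*A2*A3 + c^2*A2^2 + -14*c^2*A1*A3 + 2*c^2*A1*A2 + c^2*A1^2 + 34*c^2*A0*A3 + -14*c^2*A0*A2 + c^4*A3^2 + 2*c^4*A2*A3 + c^4*A2^2 + 2*c^4*A1*A3 + 2*c^4*A1*A2 + -62*c^4*A0*A3 + c^6*A3^2 + 2*c^6*A2*A3 + c^6*A2^2 + 2*c^6*A1*A3 + c^8*A3^2 + 2*c^8*A2*A3 + c^10*A3^2 + s^2*A3^2 + -2*s^2*A2*A3 + s^2*A2^2 + 2*s^2*A1*A3 + -2*s^2*A1*A2 + s^2*A1^2 + -2*s^2*A0*A3 + 2*s^2*A0*A2 + 2*s^2*c^2*A3^2 + 2*s^2*c^2*A2^2 + -12*s^2*c^2*A1*A3 + 32*s^2*c^2*A0*A3 + 3*s^2*c^4*A3^2 + 2*s^2*c^4*A2*A3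 + 3*s^2*c^4*A2^2 + -10*s^2*c^4*A1*A3 + 4*s^2*c^6*A3^2 + 4*s^2*c^6*A2*A3 + 5*s^2*c^8*A3^2 + s^4*A3^2 + -2*s^4*A2*A3 + s^4*A2^2 + 2*s^4*A1*A3 + -2*s^4*A1*A2 + -2*s^4*A0*A3 + 3*s^4*c^2*A3^2 + -2*s^4*c^2*A2*A3 + 3*s^4*c^2*A2^2 + -10*s^4*c^2*A1*A3 + 6*s^4*c^4*A3^2 + 10*s^4*c^6*A3^2 + s^6*A3^2 + -2*s^6*A2*A3 + s^6*A2^2 + 2*s^6*A1*A3 + 4*s^6*c^2*A3^2 + -4*s^6*c^2*A2*A3 + 10*s^6*c^4*A3^2 + s^8*A3^2 + -2*s^8*A2*A3 + 5*s^8*c^2*A3^2 + s^10*A3^2)*(s^2+c^2-1) + (A2*A3 + -2*A1*A3 + A1*A2 + 2*A0*A3 + -2*A0*A2 + A0*A1 + -2*c*A1*A3 + 6*c*A0*A3 + -2*c*A0*A2 + 4*c^2*A1*A3 + -16*c^2*A0*A3 + 4*c^2*A0*A2 + -8*c^3*A0*A3 + 16*c^4*A0*A3)*(4*c^2+2*c-1))%R; [field| rewrite H1, H2; ring].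
Qed.
Definition uZ (b0 b1 b2 b3 : Z) : Z :=
  (2*(b0*b0+b1*b1+b2*b2+b3*b3) - (b0*b1+b1*b2+b2*b3) - (b0*b2+b1*b3+b0*b3))%Z.
Definition vZ (b0 b1 b2 b3 : Z) : Z :=
  ((b0*b1+b1*b2+b2*b3) - (b0*b2+b1*b3+b0*b3))%Z.
Lemma small_dist b0 b1 b2 b3 :
  zcomb b0 b1 b2 b3 zeta5 <> 0 ->
  (Cmod (zcomb b0 b1 b2 b3 zeta5) < 1)%R ->
  (Cmod (zcomb b0 b1 b2 b3 (zeta5 ^ 2)) <= 2)%R ->
  Cmod (zcomb b0 b1 b2 b3 zeta5) = ((sqrt 5 - 1) / 2)%R.
Proof.
  intros Hnz Hlt Hle.
  assert (Hpos : (0 < Cmod (zcomb b0 b1 b2 b3 zeta5))%R).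
  { destruct (Rle_lt_or_eq_dec 0 _ (Cmod_ge_0 (zcomb b0 b1 b2 b3 zeta5))) as [h|h]; auto.
    exfalso; apply Hnz, Cmod_eq_0; auto. }
  pose proof (Cmod_ge_0 (zcomb b0 b1 b2 b3 (zeta5 ^ 2))) as Hy0.
  pose proof (Cmod_sq (zcomb b0 b1 b2 b3 zeta5)) as HX.
  pose proof (Cmod_sq (zcomb b0 b1 b2 b3 (zeta5 ^ 2))) as HY.
  set (X := Cmod (zcomb b0 b1 b2 b3 zeta5)) in *.
  set (Y := Cmod (zcomb b0 b1 b2 b3 (zeta5 ^ 2))) in *.
  rewrite zeta5_eq, zcomb_pair in HX. rewrite zeta2_eq, zcomb_pair in HY.
  simpl fst in HX, HY. simpl snd in HX, HY.
  rewrite norm1 in HX. rewrite norm2 in HY.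
  assert (HU : Uq (IZR b0) (IZR b1) (IZR b2) (IZR b3) = IZR (uZ b0 b1 b2 b3)).
  { unfold Uq, uZ. repeat rewrite ?plus_IZR, ?minus_IZR, ?mult_IZR. ring. }
  assert (HV : Vq (IZR b0) (IZR b1) (IZR b2) (IZR b3) = IZR (vZ b0 b1 b2 b3)).
  { unfold Vq, vZ. repeat rewrite ?plus_IZR, ?minus_IZR, ?mult_IZR. ring. }
  rewrite HU, HV in HX, HY.
  assert (Hpar : (uZ b0 b1 b2 b3 - vZ b0 b1 b2 b3 = 2 * (b0*b0+b1*b1+b2*b2+b3*b3 - (b0*b1+b1*b2+b2*b3)))%Z).
  { unfold uZ, vZ. ring. }
  set (u := uZ b0 b1 b2 b3) in *. set (v := vZ b0 b1 b2 b3) in *.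
  set (k := (b0*b0+b1*b1+b2*b2+b3*b3 - (b0*b1+b1*b2+b2*b3))%Z) in *.
  pose proof cc_eq. pose proof cc_pos. rewrite r_eq.
  set (r := (4*cc+1)%R) in *.
  assert (Hr1 : (2.2 < r < 2.3)%R) by (unfold r; nra).
  assert (Hu1 : (0 < u)%Z) by (apply lt_IZR; nra).
  assert (Hu2 : (u < 5)%Z) by (apply lt_IZR; nra).
  assert (Hv1 : (-2 < v)%Z) by (apply lt_IZR; nra).
  assert (Hv2 : (v < 1)%Z) by (apply lt_IZR; nra).
  assert (Hc : ((u = 3 /\ v = -1) \/ (u = 1 /\ v = -1) \/ (u = 2 /\ v = 0) \/ (u = 4 /\ v = 0))%Z) by lia.
  destruct Hc as [[-> ->]|[[-> ->]|[[-> ->]|[-> ->]]]]; simpl IZR in *.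
  - unfold r in *. nra.
  - nra.
  - nra.
  - nra.
Qed.
Lemma bounds : (0.309 < cc < 0.30903 /\ 0.951 < ss < 0.9511 /\
   0.5877 < 2*ss*cc < 0.5879 /\ 0.809 < 1/2 + cc < 0.8091)%R.
Proof.
  pose proof cc_eq. pose proof cc_pos. pose proof ss_eq. pose proof ss_pos.
  assert (0.309 < cc < 0.30903)%R by nra.
  assert (0.951 < ss < 0.9511)%R by nra.
  repeat split; nra.
Qed.
Lemma close vx vy x y t : (vx^2+vy^2 = 1)%R -> (x^2+y^2 <= 1)%R ->
  t = (-(x*vx+y*vy))%R -> (0 <= t)%R -> (x^2+y^2 <= 4*t^2)%R ->
  ((x+vx)^2+(y+vy)^2 <= 1)%R.
Proof. intros. subst t. nra. Qed.
Lemma core1 p q a b : (1/2 <= p)%R -> (1/2 <= q)%R -> (0 <= a)%R -> (0 <= b)%R ->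
  (0 <= p*a+q*b /\ a^2+b^2 <= 4*(p*a+q*b)^2)%R.
Proof.
  intros. assert ((a+b)/2 <= p*a+q*b)%R by nra. split. lra.
  assert (((a+b)/2)^2 <= (p*a+q*b)^2)%R by (apply pow_incr; lra). nra.
Qed.
Lemma core2 c s a b : (0.3 <= c)%R -> (0.95 <= s)%R -> (0 <= a)%R -> (a <= b)%R ->
  (0 <= c*a+s*b /\ a^2+b^2 <= 4*(c*a+s*b)^2)%R.
Proof.
  intros. assert (0.3*a+0.95*b <= c*a+s*b)%R by nra. split. lra.
  assert ((0.3*a+0.95*b)^2 <= (c*a+s*b)^2)%R by (apply pow_incr; lra). nra.
Qed.
Lemma unit_norms : ((1/2+cc)^2 + (2*ss*cc)^2 = 1 /\ cc^2+ss^2 = 1)%R.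
Proof.
  pose proof cc_eq. pose proof ss_eq. split; [|lra].
  replace ((2*ss*cc)^2)%R with (4*(ss^2)*cc^2)%R by ring.
  replace (ss^2)%R with (1 - cc^2)%R by lra. nra.
Qed.
Lemma sector x y : (x^2+y^2 <= 1)%R ->
  ((x+1)^2+(y+0)^2 <= 1 \/ (x+-(1/2+cc))^2+(y+2*ss*cc)^2 <= 1 \/
   (x+cc)^2+(y+-ss)^2 <= 1 \/ (x+cc)^2+(y+ss)^2 <= 1 \/
   (x+-(1/2+cc))^2+(y+-(2*ss*cc))^2 <= 1)%R.
Proof.
  intros H. pose proof bounds as B. pose proof unit_norms as [N1 N2].
  destruct (Rle_or_lt 0 x) as [hx|hx]; destruct (Rle_or_lt 0 y) as [hy|hy].
  - do 4 right. destruct (core1 (1/2+cc) (2*ss*cc) x y) as [h1 h2]; try lra.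
    apply (close _ _ x y ((1/2+cc)*x+(2*ss*cc)*y)); auto; first [ring|nra].
  - right; left. destruct (core1 (1/2+cc) (2*ss*cc) x (-y)) as [h1 h2]; try lra.
    apply (close _ _ x y ((1/2+cc)*x+(2*ss*cc)*(-y))); auto; first [ring|nra].
  - destruct (Rle_or_lt 0 (x+y)).
    + right; right; left. destruct (core2 cc ss (-x) y) as [h1 h2]; try lra.
      apply (close _ _ x y (cc*(-x)+ss*y)); auto; first [ring|nra].
    + left. apply (close _ _ x y (-x)); auto; first [ring|nra].
  - destruct (Rle_or_lt x y).
    + left. apply (close _ _ x y (-x)); auto; first [ring|nra].
    + do 3 right; left. destruct (core2 cc ss (-x) (-y)) as [h1 h2]; try lra.
      apply (close _ _ x y (cc*(-x)+ss*(-y))); auto; first [ring|nra].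
Qed.
Lemma Cmod_le1 (p : C) : (fst p ^ 2 + snd p ^ 2 <= 1)%R -> (Cmod p <= 1)%R.
Proof. intros. pose proof (Cmod_sq p). pose proof (Cmod_ge_0 p). nra. Qed.
Lemma Cadd_sub (u v : C) : u + v - u = v.
Proof. destruct u, v. unfold Cminus, Cplus, Copp; simpl. apply injective_projections; simpl; ring. Qed.
Lemma nb_gen a0 a1 a2 a3 e0 e1 e2 e3 vx vy :
  ((Re4 (IZR e0) (IZR e1) (IZR e2) (IZR e3) cc ss)^2 + (Im4 (IZR e0) (IZR e1) (IZR e2) (IZR e3) cc ss)^2 = 1)%R ->
  Re4 (IZR e0) (IZR e1) (IZR e2) (IZR e3) (cc*cc-ss*ss) (2*cc*ss) = vx ->
  Im4 (IZR e0) (IZR e1) (IZR e2) (IZR e3) (cc*cc-ss*ss) (2*cc*ss) = vy ->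
  ((Re4 (IZR a0) (IZR a1) (IZR a2) (IZR a3) (cc*cc-ss*ss) (2*cc*ss) + vx)^2 +
   (Im4 (IZR a0) (IZR a1) (IZR a2) (IZR a3) (cc*cc-ss*ss) (2*cc*ss) + vy)^2 <= 1)%R ->
  exists z', in_S z' /\ z' <> zcomb a0 a1 a2 a3 zeta5 /\ Cmod (z' - zcomb a0 a1 a2 a3 zeta5) = 1%R.
Proof.
  intros Hn Hx Hy Hle.
  assert (Hd : Cmod (zcomb (a0+e0) (a1+e1) (a2+e2) (a3+e3) zeta5 - zcomb a0 a1 a2 a3 zeta5) = 1%R).
  { rewrite zcomb_add, Cadd_sub. pose proof (Cmod_sq (zcomb e0 e1 e2 e3 zeta5)) as Hs.
    pose proof (Cmod_ge_0 (zcomb e0 e1 e2 e3 zeta5)).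
    set (m := Cmod (zcomb e0 e1 e2 e3 zeta5)) in *.
    rewrite zeta5_eq, zcomb_pair in Hs. simpl fst in Hs; simpl snd in Hs.
    rewrite Hn in Hs. nra. }
  exists (zcomb (a0+e0) (a1+e1) (a2+e2) (a3+e3) zeta5). split; [|split; auto].
  - exists (a0+e0)%Z, (a1+e1)%Z, (a2+e2)%Z, (a3+e3)%Z. split; auto.
    rewrite zcomb_add, zeta2_eq, !zcomb_pair. apply Cmod_le1. simpl. rewrite Hx, Hy. exact Hle.
  - intro E. rewrite E in Hd. unfold Cminus in Hd. rewrite Cplus_opp_r, Cmod_0 in Hd. lra.
Qed.
Lemma efact0 a0 a1 a2 a3 :
  ((Re4 (IZR a0) (IZR a1) (IZR a2) (IZR a3) (cc*cc-ss*ss) (2*cc*ss) + 1)^2 +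
   (Im4 (IZR a0) (IZR a1) (IZR a2) (IZR a3) (cc*cc-ss*ss) (2*cc*ss) + 0)^2 <= 1)%R ->
  exists z', in_S z' /\ z' <> zcomb a0 a1 a2 a3 zeta5 /\ Cmod (z' - zcomb a0 a1 a2 a3 zeta5) = 1%R.
Proof.
  apply (nb_gen a0 a1 a2 a3 (1) (0) (0) (0)).
  - unfold Re4, Im4; pose proof ss_eq as H1; pose proof cc_eq as H2; set (c:=cc) in *; set (s:=ss) in *; apply Rminus_diag_uniq; transitivity (0*(s^2+c^2-1) + 0*(4*c^2+2*c-1))%R; [field| rewrite H1, H2; ring].
  - unfold Re4, Im4; pose proof ss_eq as H1; pose proof cc_eq as H2; set (c:=cc) in *; set (s:=ss) in *; apply Rminus_diag_uniq; transitivity (0*(s^2+c^2-1) + 0*(4*c^2+2*c-1))%R; [field| rewrite H1, H2; ring].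
  - unfold Re4, Im4; pose proof ss_eq as H1; pose proof cc_eq as H2; set (c:=cc) in *; set (s:=ss) in *; apply Rminus_diag_uniq; transitivity (0*(s^2+c^2-1) + 0*(4*c^2+2*c-1))%R; [field| rewrite H1, H2; ring].
Qed.

Lemma efact1 a0 a1 a2 a3 :
  ((Re4 (IZR a0) (IZR a1) (IZR a2) (IZR a3) (cc*cc-ss*ss) (2*cc*ss) + (-(1/2+cc)))^2 +
   (Im4 (IZR a0) (IZR a1) (IZR a2) (IZR a3) (cc*cc-ss*ss) (2*cc*ss) + (2*ss*cc))^2 <= 1)%R ->
  exists z', in_S z' /\ z' <> zcomb a0 a1 a2 a3 zeta5 /\ Cmod (z' - zcomb a0 a1 a2 a3 zeta5) = 1%R.
Proof.
  apply (nb_gen a0 a1 a2 a3 (0) (1) (0) (0)).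
  - unfold Re4, Im4; pose proof ss_eq as H1; pose proof cc_eq as H2; set (c:=cc) in *; set (s:=ss) in *; apply Rminus_diag_uniq; transitivity ((1)*(s^2+c^2-1) + 0*(4*c^2+2*c-1))%R; [field| rewrite H1, H2; ring].
  - unfold Re4, Im4; pose proof ss_eq as H1; pose proof cc_eq as H2; set (c:=cc) in *; set (s:=ss) in *; apply Rminus_diag_uniq; transitivity ((-1)*(s^2+c^2-1) + ((1/2))*(4*c^2+2*c-1))%R; [field| rewrite H1, H2; ring].
  - unfold Re4, Im4; pose proof ss_eq as H1; pose proof cc_eq as H2; set (c:=cc) in *; set (s:=ss) in *; apply Rminus_diag_uniq; transitivity (0*(s^2+c^2-1) + 0*(4*c^2+2*c-1))%R; [field| rewrite H1, H2; ring].
Qed.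

Lemma efact2 a0 a1 a2 a3 :
  ((Re4 (IZR a0) (IZR a1) (IZR a2) (IZR a3) (cc*cc-ss*ss) (2*cc*ss) + cc)^2 +
   (Im4 (IZR a0) (IZR a1) (IZR a2) (IZR a3) (cc*cc-ss*ss) (2*cc*ss) + (-ss))^2 <= 1)%R ->
  exists z', in_S z' /\ z' <> zcomb a0 a1 a2 a3 zeta5 /\ Cmod (z' - zcomb a0 a1 a2 a3 zeta5) = 1%R.
Proof.
  apply (nb_gen a0 a1 a2 a3 (0) (0) (1) (0)).
  - unfold Re4, Im4; pose proof ss_eq as H1; pose proof cc_eq as H2; set (c:=cc) in *; set (s:=ss) in *; apply Rminus_diag_uniq; transitivity ((1 + c^2 + s^2)*(s^2+c^2-1) + 0*(4*c^2+2*c-1))%R; [field| rewrite H1, H2; ring].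
  - unfold Re4, Im4; pose proof ss_eq as H1; pose proof cc_eq as H2; set (c:=cc) in *; set (s:=ss) in *; apply Rminus_diag_uniq; transitivity ((1 + -7*c^2 + s^2)*(s^2+c^2-1) + (-1 + -1*c + 2*c^2)*(4*c^2+2*c-1))%R; [field| rewrite H1, H2; ring].
  - unfold Re4, Im4; pose proof ss_eq as H1; pose proof cc_eq as H2; set (c:=cc) in *; set (s:=ss) in *; apply Rminus_diag_uniq; transitivity ((-4*s*c)*(s^2+c^2-1) + (-1*s + 2*s*c)*(4*c^2+2*c-1))%R; [field| rewrite H1, H2; ring].
Qed.

Lemma efact3 a0 a1 a2 a3 :
  ((Re4 (IZR a0) (IZR a1) (IZR a2) (IZR a3) (cc*cc-ss*ss) (2*cc*ss) + cc)^2 +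
   (Im4 (IZR a0) (IZR a1) (IZR a2) (IZR a3) (cc*cc-ss*ss) (2*cc*ss) + ss)^2 <= 1)%R ->
  exists z', in_S z' /\ z' <> zcomb a0 a1 a2 a3 zeta5 /\ Cmod (z' - zcomb a0 a1 a2 a3 zeta5) = 1%R.
Proof.
  apply (nb_gen a0 a1 a2 a3 (0) (0) (0) (1)).
  - unfold Re4, Im4; pose proof ss_eq as H1; pose proof cc_eq as H2; set (c:=cc) in *; set (s:=ss) in *; apply Rminus_diag_uniq; transitivity ((1 + c^2 + c^4 + s^2 + 2*s^2*c^2 + s^4)*(s^2+c^2-1) + 0*(4*c^2+2*c-1))%R; [field| rewrite H1, H2; ring].
  - unfold Re4, Im4; pose proof ss_eq as H1; pose proof cc_eq as H2; set (c:=cc) in *; set (s:=ss) in *; apply Rminus_diag_uniq; transitivity ((-1 + 17*c^2 + -31*c^4 + -1*s^2 + 16*s^2*c^2 + -1*s^4)*(s^2+c^2-1) + (1 + 3*c + -8*c^2 + -4*c^3 + 8*c^4)*(4*c^2+2*c-1))%R; [field| rewrite H1, H2; ring].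
  - unfold Re4, Im4; pose proof ss_eq as H1; pose proof cc_eq as H2; set (c:=cc) in *; set (s:=ss) in *; apply Rminus_diag_uniq; transitivity ((6*s*c + -26*s*c^3 + 6*s^3*c)*(s^2+c^2-1) + (s + -4*s*c + -4*s*c^2 + 8*s*c^3)*(4*c^2+2*c-1))%R; [field| rewrite H1, H2; ring].
Qed.

Lemma efact4 a0 a1 a2 a3 :
  ((Re4 (IZR a0) (IZR a1) (IZR a2) (IZR a3) (cc*cc-ss*ss) (2*cc*ss) + (-(1/2+cc)))^2 +
   (Im4 (IZR a0) (IZR a1) (IZR a2) (IZR a3) (cc*cc-ss*ss) (2*cc*ss) + (-(2*ss*cc)))^2 <= 1)%R ->
  exists z', in_S z' /\ z' <> zcomb a0 a1 a2 a3 zeta5 /\ Cmod (z' - zcomb a0 a1 a2 a3 zeta5) = 1%R.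
Proof.
  apply (nb_gen a0 a1 a2 a3 (-1) (-1) (-1) (-1)).
  - unfold Re4, Im4; pose proof ss_eq as H1; pose proof cc_eq as H2; set (c:=cc) in *; set (s:=ss) in *; apply Rminus_diag_uniq; transitivity ((-1 + -2*c + 4*c^2 + 2*c^3 + c^4 + 2*s^2*c + 2*s^2*c^2 + s^4)*(s^2+c^2-1) + (1 + 2*c)*(4*c^2+2*c-1))%R; [field| rewrite H1, H2; ring].
  - unfold Re4, Im4; pose proof ss_eq as H1; pose proof cc_eq as H2; set (c:=cc) in *; set (s:=ss) in *; apply Rminus_diag_uniq; transitivity ((1 + -10*c^2 + 31*c^4 + -16*s^2*c^2 + s^4)*(s^2+c^2-1) + ((-1/2) + -2*c + 6*c^2 + 4*c^3 + -8*c^4)*(4*c^2+2*c-1))%R; [field| rewrite H1, H2; ring].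
  - unfold Re4, Im4; pose proof ss_eq as H1; pose proof cc_eq as H2; set (c:=cc) in *; set (s:=ss) in *; apply Rminus_diag_uniq; transitivity ((-2*s*c + 26*s*c^3 + -6*s^3*c)*(s^2+c^2-1) + (2*s*c + 4*s*c^2 + -8*s*c^3)*(4*c^2+2*c-1))%R; [field| rewrite H1, H2; ring].
Qed.

Lemma unit_nb a0 a1 a2 a3 : (Cmod (zcomb a0 a1 a2 a3 (zeta5 ^ 2)) <= 1)%R ->
  exists z', in_S z' /\ z' <> zcomb a0 a1 a2 a3 zeta5 /\ Cmod (z' - zcomb a0 a1 a2 a3 zeta5) = 1%R.
Proof.
  intros H. pose proof (Cmod_sq (zcomb a0 a1 a2 a3 (zeta5 ^ 2))) as Hs.
  pose proof (Cmod_ge_0 (zcomb a0 a1 a2 a3 (zeta5 ^ 2))).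
  set (m := Cmod (zcomb a0 a1 a2 a3 (zeta5 ^ 2))) in *.
  rewrite zeta2_eq, zcomb_pair in Hs. simpl fst in Hs; simpl snd in Hs.
  set (x := Re4 (IZR a0) (IZR a1) (IZR a2) (IZR a3) (cc * cc - ss * ss) (2 * cc * ss)) in *.
  set (y := Im4 (IZR a0) (IZR a1) (IZR a2) (IZR a3) (cc * cc - ss * ss) (2 * cc * ss)) in *.
  assert (Hxy : (x^2+y^2 <= 1)%R) by nra.
  destruct (sector x y Hxy) as [h|[h|[h|[h|h]]]].
  - apply efact0; exact h.
  - apply efact1; exact h.
  - apply efact2; exact h.
  - apply efact3; exact h.
  - apply efact4; exact h.
Qed.
Lemma Csub0 (u v : C) : u - v = 0 -> u = v.
Proof.
  destruct u as [u1 u2], v as [v1 v2]. unfold Cminus, Cplus, Copp, RtoC; simpl.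
  intros H. injection H; intros. f_equal; lra.
Qed.
Theorem mainTheorem1 :
  forall z : C, in_S z ->
    exists d : R,
      (d = (sqrt 5 - 1) / 2 \/ d = 1)%R /\
      (exists z' : C, in_S z' /\ z' <> z /\ Cmod (z' - z) = d) /\
      (forall z' : C, in_S z' -> z' <> z -> (d <= Cmod (z' - z))%R).
Proof.
  intros z [a0 [a1 [a2 [a3 [Hz Hs]]]]].
  assert (K : forall z', in_S z' -> z' <> z ->
     (1 <= Cmod (z' - z) \/ Cmod (z' - z) = (sqrt 5 - 1) / 2)%R).
  { intros z' [b0 [b1 [b2 [b3 [Hz' Hs']]]]] Hne. subst z z'.
    rewrite zcomb_sub.
    destruct (Rlt_or_le (Cmod (zcomb (b0 - a0) (b1 - a1) (b2 - a2) (b3 - a3) zeta5)) 1) as [h|h];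
      [right | left; exact h].
    apply small_dist; auto.
    - intro E. apply Hne. apply Csub0. rewrite zcomb_sub. exact E.
    - rewrite <- zcomb_sub. unfold Cminus.
      pose proof (Cmod_triangle (zcomb b0 b1 b2 b3 (zeta5 ^ 2)) (- zcomb a0 a1 a2 a3 (zeta5 ^ 2))).
      rewrite Cmod_opp in H. lra. }
  assert (Hr : ((sqrt 5 - 1) / 2 < 1)%R).
  { rewrite r_eq. pose proof bounds. lra. }
  subst z. destruct (unit_nb a0 a1 a2 a3 Hs) as [u Hu].
  destruct (classic (exists z', in_S z' /\ z' <> zcomb a0 a1 a2 a3 zeta5 /\
                       Cmod (z' - zcomb a0 a1 a2 a3 zeta5) = ((sqrt 5 - 1) / 2)%R)) as [Hex|Hno].
  - exists ((sqrt 5 - 1) / 2)%R. split; [left; reflexivity|]. split; [exact Hex|].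
    intros z' H1 H2. destruct (K z' H1 H2); lra.
  - exists 1%R. split; [right; reflexivity|]. split; [exists u; exact Hu|].
    intros z' H1 H2. destruct (K z' H1 H2) as [h|h]; [exact h|].
    exfalso. apply Hno. exists z'. auto.
Qed.
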